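(* Let $k>0$ and $\mu<0$ be constants, and let $m_1,m_2$ be locally Lipschitz functions on an interval $[0,\tau)$ with $m_1\le m_2$, $m_2(0)\ge 0$, satisfying for a.e. $t\in(0,\tau)$ \[ m_1'(t)\le \mu m_1(t)^2+k\,(m_2(t)-m_1(t)),\qquad m_2'(t)\le \mu m_2(t)^2+k\,(m_2(t)-m_1(t)). \] If $m_1(0)\le \frac{2k}{\mu}-m_2(0)$, then $m(t):=m_1(t)-\frac{k}{\mu}$ satisfies $m(0)<0$ and \[ m(t)\le \frac{m(0)}{1-m(0)\mu t} \] for all $t\in[0,\tau)$ with $t<\frac{1}{m(0)\mu}$; in particular $m(t)\to-\infty$ as $t\to\frac{1}{m(0)\mu}$ (so that $\tau\le \frac{1}{m(0)\mu}$ if $m_1$ stays finite on $[0,\tau)$).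
   Context: In the paper $m_1(t)=\inf_x u_x(t,x)$, $m_2(t)=\sup_x u_x(t,x)$ and $k=K(0)$; the lemma is stated here as a self-contained statement about the differential inequalities. *)

(* Defs.v *)
From Stdlib Require Import Reals.
Open Scope R_scope.

Definition null_set (N : R -> Prop) : Prop :=
  forall eps : R, 0 < eps ->
    exists a b : nat -> R,
      (forall n, a n <= b n) /\
      (forall x, N x -> exists n, a n < x < b n) /\
      (forall n, sum_f_R0 (fun i => b i - a i) n <= eps).

Definition loc_lipschitz_0 (f : R -> R) (tau : R) : Prop :=
  forall b, 0 <= b < tau ->
    exists L, 0 <= L /\
      forall x y, 0 <= x <= b -> 0 <= y <= b -> Rabs (f x - f y) <= L * Rabs (x - y).

(* Main.v *)
Require Import Defs.
From Stdlib Require Import Reals Lra Psatz Classical Arith.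
Open Scope R_scope.

Definition len (al be : nat -> R) (a : R) (i : nat) (t : R) :=
  Rmax 0 (Rmin (be i) t - Rmax (al i) a).

Definition Fn al be a n t := sum_f_R0 (fun i => len al be a i t) n.

Lemma len_nonneg al be a i t : 0 <= len al be a i t.
Proof. unfold len; apply Rmax_l. Qed.

Lemma len_le al be a i t : al i <= be i -> len al be a i t <= be i - al i.
Proof. intros H. unfold len, Rmax, Rmin; repeat destruct Rle_dec; lra. Qed.

Lemma len_mono al be a i t s : t <= s -> len al be a i t <= len al be a i s.
Proof. intros H. unfold len, Rmax, Rmin; repeat destruct Rle_dec; lra. Qed.

Lemma len_jump al be a i t s : a <= t -> al i < t -> t <= s -> s < be i ->
  len al be a i t + (s - t) <= len al be a i s.
Proof. intros. unfold len, Rmax, Rmin; repeat destruct Rle_dec; lra. Qed.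

Lemma Fn_nonneg al be a n t : 0 <= Fn al be a n t.
Proof. unfold Fn; induction n; simpl. apply len_nonneg.
  pose proof (len_nonneg al be a (S n) t); lra. Qed.

Lemma Fn_mono_t al be a n t s : t <= s -> Fn al be a n t <= Fn al be a n s.
Proof. intros H; unfold Fn; induction n; simpl. now apply len_mono.
  pose proof (len_mono al be a (S n) t s H); lra. Qed.

Lemma Fn_mono_n al be a n m t : (n <= m)%nat -> Fn al be a n t <= Fn al be a m t.
Proof. intros H; induction H. lra. unfold Fn in *; simpl.
  pose proof (len_nonneg al be a (S m) t); lra. Qed.

Lemma Fn_le al be a n t : (forall i, al i <= be i) ->
  Fn al be a n t <= sum_f_R0 (fun i => be i - al i) n.
Proof. intros H; unfold Fn; induction n; simpl. now apply len_le.
  pose proof (len_le al be a (S n) t (H _)); lra. Qed.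

Lemma Fn_jump al be a i n t s : (i <= n)%nat -> a <= t -> al i < t -> t <= s -> s < be i ->
  Fn al be a n t + (s - t) <= Fn al be a n s.
Proof. intros Hn Ha H1 H2 H3. induction Hn.
  - destruct i; unfold Fn; simpl. now apply len_jump.
    pose proof (Fn_mono_t al be a i t s H2). unfold Fn in H.
    pose proof (len_jump al be a (S i) t s Ha H1 H2 H3). lra.
  - unfold Fn in *; simpl. pose proof (len_mono al be a (S m) t s H2). lra.
Qed.

Lemma mono_core (f : R -> R) (a b L e del : R) (al be : nat -> R) :
  a <= b -> 0 <= L -> 0 < e ->
  (forall n, al n <= be n) ->
  (forall n, sum_f_R0 (fun i => be i - al i) n <= del) ->
  (forall t s, a <= t <= s -> s <= b -> f s - f t <= L * (s - t)) ->
  (forall t, a <= t < b -> (exists n, al n < t < be n) \/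
      (exists eta, 0 < eta /\ forall s, t < s < t + eta -> s <= b -> f s - f t <= e * (s - t))) ->
  f b - f a <= e * (b - a) + 2 * L * del.
Proof.
  intros Hab HL He Hab' Hsum Hlip Hloc0.
  assert (HE: forall t, bound (fun x => exists n, x = Fn al be a n t)).
  { intro t; exists del; intros x [n ->]. eapply Rle_trans; [apply Fn_le; auto | auto]. }
  assert (HE2: forall t, exists x, (fun x => exists n, x = Fn al be a n t) x).
  { intro t; exists (Fn al be a 0 t); exists 0%nat; auto. }
  set (F := fun t => proj1_sig (completeness _ (HE t) (HE2 t))).
  assert (HF: forall t, is_lub (fun x => exists n, x = Fn al be a n t) (F t)).
  { intro t; unfold F; destruct (completeness _ (HE t) (HE2 t)) as [x Hx]; simpl; exact Hx. }
  clearbody F.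
  assert (Fge: forall n t, Fn al be a n t <= F t).
  { intros n t; apply (proj1 (HF t)); exists n; auto. }
  assert (Fdel: forall t, F t <= del).
  { intro t; apply (proj2 (HF t)); intros x [n ->]. eapply Rle_trans; [apply Fn_le; auto | auto]. }
  assert (Fmono: forall t s, t <= s -> F t <= F s).
  { intros t s H; apply (proj2 (HF t)); intros x [n ->].
    eapply Rle_trans; [apply Fn_mono_t, H | apply Fge]. }
  assert (Fjump: forall i t s, a <= t -> al i < t -> t <= s -> s < be i -> F t + (s - t) <= F s).
  { intros i t s H1 H2 H3 H4.
    assert (F t <= F s - (s - t)); [|lra].
    apply (proj2 (HF t)); intros x [n ->].
    destruct (le_lt_dec i n) as [Hin|Hin].
    - pose proof (Fn_jump al be a i n t s Hin H1 H2 H3 H4). pose proof (Fge n s). lra.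
    - pose proof (Fn_mono_n al be a n i t ltac:(lia)).
      pose proof (Fn_jump al be a i i t s (le_n _) H1 H2 H3 H4). pose proof (Fge i s). lra. }
  set (h := fun t => f t - e * (t - a) - 2 * L * F t).
  assert (Hloc: forall t, a <= t < b -> exists eta, 0 < eta /\
             forall s, t < s < t + eta -> s <= b -> h s <= h t).
  { intros t Ht. destruct (Hloc0 t Ht) as [[n Hn]|[eta [Heta Hs]]].
    - exists (be n - t); split; [lra|]. intros s Hs1 Hs2.
      pose proof (Hlip t s ltac:(lra) Hs2). pose proof (Fjump n t s ltac:(lra) ltac:(lra) ltac:(lra) ltac:(lra)).
      unfold h. assert (L * (F s - F t) >= L * (s - t)) by nra. nra.
    - exists eta; split; auto. intros s Hs1 Hs2. pose proof (Hs s Hs1 Hs2).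
      pose proof (Fmono t s ltac:(lra)). unfold h. assert (L * (F s - F t) >= 0) by nra. nra. }
  set (S := fun t => a <= t <= b /\ forall s, a <= s <= t -> h s <= h a).
  assert (HSb: bound S). { exists b; intros x [Hx _]; lra. }
  assert (HSa: exists x, S x). { exists a; split; [lra|]. intros s Hs; replace s with a by lra; lra. }
  destruct (completeness S HSb HSa) as [c [Hc1 Hc2]].
  assert (Hac: a <= c). { apply Hc1; destruct HSa as [x Hx]. split; [lra|]. intros s Hs; replace s with a by lra; lra. }
  assert (Hcb: c <= b). { apply Hc2; intros x [Hx _]; lra. }
  assert (Hbelow: forall s, a <= s < c -> h s <= h a).
  { intros s Hs. destruct (classic (exists t, S t /\ s <= t)) as [[t [[_ Ht] Hst]]|Hn].
    - apply Ht; lra.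
    - exfalso. assert (c <= s); [|lra]. apply Hc2. intros x Hx.
      destruct (Rle_lt_dec s x); [|lra]. exfalso; apply Hn; exists x; auto. }
  assert (Hhc: h c <= h a).
  { destruct (Req_dec c a) as [->|Hca]; [lra|].
    destruct (Rle_lt_dec (h c) (h a)) as [|Hd]; auto. exfalso.
    set (d := h c - h a).
    set (w := d / (2 * (L + 1))).
    assert (Hw: w * (2 * (L + 1)) = d) by (unfold w; field; lra).
    assert (Hw0: 0 < w) by (unfold w, d; apply Rdiv_lt_0_compat; lra).
    set (s := Rmax a (c - w)).
    assert (Hs1: a <= s) by apply Rmax_l.
    assert (Hs2: c - w <= s) by apply Rmax_r.
    assert (Hs3: s < c) by (apply Rmax_lub_lt; lra).
    pose proof (Hbelow s ltac:(lra)).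
    pose proof (Hlip s c ltac:(lra) Hcb). pose proof (Fmono s c ltac:(lra)).
    assert (h c - h s <= L * (c - s)).
    { unfold h. assert (L * (F c - F s) >= 0) by nra. nra. }
    assert (L * (c - s) <= L * w) by nra. unfold d in Hw. nra. }
  assert (Hceq: c = b).
  { destruct (Req_dec c b); auto. exfalso.
    destruct (Hloc c ltac:(lra)) as [eta [Heta Hs]].
    set (t' := Rmin b (c + eta / 2)).
    assert (t' <= b) by apply Rmin_l.
    assert (t' <= c + eta/2) by apply Rmin_r.
    assert (c < t') by (apply Rmin_glb_lt; lra).
    assert (S t').
    { split; [lra|]. intros s Hs'.
      destruct (Rlt_le_dec c s).
      - pose proof (Hs s ltac:(lra) ltac:(lra)). lra.
      - destruct (Req_dec s c) as [->|]; auto. apply Hbelow; lra. }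
    pose proof (Hc1 t' H3). lra. }
  subst c. unfold h in Hhc.
  pose proof (Fge 0%nat a). pose proof (Fn_nonneg al be a 0 a). pose proof (Fdel b).
  assert (L * F a >= 0) by nra. assert (L * F b <= L * del) by nra. nra.
Qed.
Lemma mono_closed (f : R -> R) (a b L : R) (N : R -> Prop) :
  a <= b -> 0 <= L -> null_set N ->
  (forall t s, a <= t <= s -> s <= b -> f s - f t <= L * (s - t)) ->
  (forall t, a <= t < b -> ~ N t -> forall e, 0 < e -> exists eta, 0 < eta /\
        forall s, t < s < t + eta -> s <= b -> f s - f t <= e * (s - t)) ->
  f b <= f a.
Proof.
  intros Hab HL HN Hlip Hgood.
  destruct (Rle_lt_dec (f b) (f a)) as [|Hd]; auto. exfalso.
  set (D := f b - f a).
  set (e := D / (2 * (b - a + 1))).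
  assert (He: e * (2 * (b - a + 1)) = D) by (unfold e; field; lra).
  assert (He0: 0 < e) by (unfold e, D; apply Rdiv_lt_0_compat; lra).
  set (del := D / (4 * (L + 1))).
  assert (Hdl: del * (4 * (L + 1)) = D) by (unfold del; field; lra).
  assert (Hdl0: 0 < del) by (unfold del, D; apply Rdiv_lt_0_compat; lra).
  destruct (HN del Hdl0) as [al [be [H1 [H2 H3]]]].
  pose proof (mono_core f a b L e del al be Hab HL He0 H1 H3 Hlip) as Hc.
  assert (f b - f a <= e * (b - a) + 2 * L * del).
  { apply Hc. intros t Ht. destruct (classic (N t)) as [HNt|HNt].
    - left; auto.
    - right; auto. }
  unfold D in *. nra.
Qed.

Lemma mono (f : R -> R) (a b L : R) (N : R -> Prop) :
  a <= b -> 0 <= L -> null_set N ->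
  (forall t s, a <= t <= s -> s <= b -> f s - f t <= L * (s - t)) ->
  (forall t, a < t < b -> ~ N t -> forall e, 0 < e -> exists eta, 0 < eta /\
        forall s, t < s < t + eta -> s <= b -> f s - f t <= e * (s - t)) ->
  f b <= f a.
Proof.
  intros Hab HL HN Hlip Hgood.
  destruct (Req_dec a b) as [->|Hne]; [lra|].
  destruct (Rle_lt_dec (f b) (f a)) as [|Hd]; auto. exfalso.
  set (D := f b - f a).
  set (w := Rmin ((b - a) / 2) (D / (2 * (L + 1)))).
  assert (Hw0: 0 < w) by (apply Rmin_pos; unfold D; apply Rdiv_lt_0_compat; lra).
  assert (Hw1: w <= (b - a) / 2) by apply Rmin_l.
  assert (Hw2: w <= D / (2 * (L + 1))) by apply Rmin_r.
  assert (Hq: D / (2 * (L + 1)) * (2 * (L + 1)) = D) by (field; lra).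
  assert (f b <= f (a + w)).
  { apply (mono_closed f (a + w) b L N); auto; try lra.
    - intros t s Ht Hs; apply Hlip; lra.
    - intros t Ht; apply Hgood; lra. }
  pose proof (Hlip a (a + w) ltac:(lra) ltac:(lra)).
  assert (L * w <= L * (D / (2 * (L + 1)))) by nra.
  unfold D in *. nra.
Qed.

Lemma deriv_good f t d D : derivable_pt_lim f t d -> d <= D -> forall e, 0 < e ->
  exists eta, 0 < eta /\ forall s, t < s < t + eta -> f s - f t <= (D + e) * (s - t).
Proof.
  intros Hd HD e He. destruct (Hd e He) as [delta Hdel].
  exists delta; split; [apply cond_pos|]. intros s Hs.
  assert (Hh: s - t <> 0) by lra.
  assert (Ha: Rabs (s - t) < delta) by (rewrite Rabs_right; lra).
  pose proof (Hdel (s - t) Hh Ha) as Hq. replace (t + (s - t)) with s in Hq by ring.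
  apply Rabs_def2 in Hq. destruct Hq as [Hq _].
  set (q := (f s - f t) / (s - t)) in *.
  assert (f s - f t = q * (s - t)) by (unfold q; field; lra). nra.
Qed.
Lemma exp_le x y : x <= y -> exp x <= exp y.
Proof. intros H; destruct (Rle_lt_or_eq_dec _ _ H) as [H' | ->]; [left; now apply exp_increasing | lra]. Qed.

Lemma deriv_w c x : derivable_pt_lim (fun y => exp (c * y)) x (c * exp (c * x)).
Proof.
  pose proof (derivable_pt_lim_scal id c x 1 (derivable_pt_lim_id x)) as H1.
  pose proof (derivable_pt_lim_comp (mult_real_fct c id) exp x (c * 1) (exp (c * x)) H1) as H2.
  replace (c * exp (c * x)) with (exp (c * x) * (c * 1)) by ring.
  apply H2. unfold mult_real_fct, id. apply derivable_pt_lim_exp.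
Qed.

Lemma algA m1 m2 r mu d1 d2 : d1 <= mu*m1^2 + (r*mu)*(m2-m1) ->
  d2 <= mu*m2^2 + (r*mu)*(m2-m1) -> mu < 0 -> d1 + d2 <= 2*(r*mu)*(m1+m2-2*r).
Proof.
  intros H1 H2 Hmu.
  assert (mu * (m1 - 2*r)^2 <= 0) by (pose proof (pow2_ge_0 (m1 - 2*r)); nra).
  assert (mu * m2^2 <= 0) by (pose proof (pow2_ge_0 m2); nra).
  assert (E: 2*(r*mu)*(m1+m2-2*r) = mu*m1^2 + (r*mu)*(m2-m1) + (mu*m2^2 + (r*mu)*(m2-m1)) - mu*(m1-2*r)^2 - mu*m2^2) by ring.
  rewrite E; lra.
Qed.

Lemma stepA k mu tau m1 m2 N :
  0 < k -> mu < 0 -> loc_lipschitz_0 m1 tau -> loc_lipschitz_0 m2 tau -> null_set N ->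
  (forall t, 0 < t < tau -> ~ N t ->
       exists d1 d2, derivable_pt_lim m1 t d1 /\ derivable_pt_lim m2 t d2 /\
         d1 <= mu * (m1 t)^2 + k * (m2 t - m1 t) /\
         d2 <= mu * (m2 t)^2 + k * (m2 t - m1 t)) ->
  m1 0 + m2 0 <= 2 * (k / mu) ->
  forall t, 0 <= t < tau -> m1 t + m2 t <= 2 * (k / mu).
Proof.
  intros Hk Hmu Hl1 Hl2 HN Hd H0 t Ht.
  set (r := k / mu) in *.
  assert (Hr: r * mu = k) by (unfold r; field; lra).
  destruct (Hl1 t Ht) as [L1 [HL1 Hm1]]. destruct (Hl2 t Ht) as [L2 [HL2 Hm2]].
  set (g := fun x => m1 x + m2 x - 2 * r).
  set (w := fun x => exp (- (2 * k) * x)).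
  set (q := fun x => Rmax (g x) 0 * w x).
  assert (Hwpos: forall x, 0 < w x) by (intro; apply exp_pos).
  assert (Hglip: forall x y, 0 <= x <= y -> y <= t -> Rabs (g y - g x) <= (L1 + L2) * (y - x)).
  { intros x y Hx Hy. pose proof (Hm1 y x ltac:(lra) ltac:(lra)). pose proof (Hm2 y x ltac:(lra) ltac:(lra)).
    rewrite (Rabs_right (y - x)) in * by lra.
    unfold g. replace (m1 y + m2 y - 2 * r - (m1 x + m2 x - 2 * r)) with ((m1 y - m1 x) + (m2 y - m2 x)) by ring.
    eapply Rle_trans; [apply Rabs_triang|]. lra. }
  assert (q t <= q 0).
  { apply (mono q 0 t (L1 + L2) N); try lra; auto.
    - intros x y Hx Hy. pose proof (Hglip x y Hx Hy).
      assert (Hwy: w y <= w x) by (unfold w; apply exp_le; nra).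
      assert (Hwx: w x <= 1) by (unfold w; rewrite <- exp_0; apply exp_le; nra).
      pose proof (Hwpos x). pose proof (Hwpos y).
      assert (HA: Rmax (g y) 0 - Rmax (g x) 0 <= Rabs (g y - g x)).
      { unfold Rmax, Rabs; repeat destruct Rle_dec; destruct Rcase_abs; lra. }
      pose proof (Rmax_r (g y) 0). pose proof (Rmax_r (g x) 0).
      unfold q.
      assert (Rmax (g y) 0 * w y <= Rmax (g y) 0 * w x) by (apply Rmult_le_compat_l; lra).
      assert ((Rmax (g y) 0 - Rmax (g x) 0) * w x <= (L1 + L2) * (y - x) * w x) by (apply Rmult_le_compat_r; lra).
      assert (0 <= (L1 + L2) * (y - x)) by (apply Rmult_le_pos; lra).
      assert ((L1 + L2) * (y - x) * w x <= (L1 + L2) * (y - x) * 1) by (apply Rmult_le_compat_l; lra).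
      lra.
    - intros x Hx HNx e He.
      destruct (Hd x ltac:(lra) HNx) as [d1 [d2 [Hd1 [Hd2 [Hb1 Hb2]]]]].
      destruct (Rlt_le_dec (g x) 0) as [Hg|Hg].
      + exists (- g x / (L1 + L2 + 1)). split.
        { apply Rdiv_lt_0_compat; lra. }
        intros y Hy Hyt.
        assert (Hq: - g x / (L1 + L2 + 1) * (L1 + L2 + 1) = - g x) by (field; lra).
        pose proof (Hglip x y ltac:(lra) Hyt).
        pose proof (Rle_abs (g y - g x)).
        assert ((L1 + L2) * (y - x) <= (L1 + L2) * (- g x / (L1 + L2 + 1))) by nra.
        assert (g y < 0) by nra.
        unfold q. rewrite (Rmax_right (g y) 0) by lra. rewrite (Rmax_right (g x) 0) by lra.
        nra.
      + set (P := fun y => g y * w y).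
        assert (HgD: derivable_pt_lim g x (d1 + d2 - 0)).
        { exact (derivable_pt_lim_minus _ _ x _ _ (derivable_pt_lim_plus _ _ x _ _ Hd1 Hd2)
                   (derivable_pt_lim_const (2 * r) x)). }
        assert (HPD: derivable_pt_lim P x ((d1 + d2 - 0) * w x + g x * (- (2 * k) * exp (- (2 * k) * x)))).
        { exact (derivable_pt_lim_mult g w x _ _ HgD (deriv_w (- (2 * k)) x)). }
        rewrite <- Hr in Hb1, Hb2.
        pose proof (algA (m1 x) (m2 x) r mu d1 d2 Hb1 Hb2 Hmu) as Halg.
        rewrite Hr in Halg. fold (g x) in Halg.
        pose proof (Hwpos x). fold (w x) in HPD.
        destruct (deriv_good P x _ 0 HPD ltac:(nra) e He) as [eta [Heta Hs]].
        exists eta; split; auto. intros y Hy Hyt. pose proof (Hs y Hy).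
        unfold P in *. unfold q. rewrite (Rmax_left (g x) 0) by lra.
        destruct (Rle_lt_dec 0 (g y)).
        * rewrite (Rmax_left (g y) 0) by lra. lra.
        * rewrite (Rmax_right (g y) 0) by lra. nra. }
  unfold q in H. replace (g 0) with (m1 0 + m2 0 - 2 * r) in H by reflexivity.
  rewrite (Rmax_right (m1 0 + m2 0 - 2 * r) 0) in H by lra.
  pose proof (Hwpos t). pose proof (Rmax_l (g t) 0).
  assert (Rmax (g t) 0 <= 0) by nra. unfold g in *. lra.
Qed.
Lemma algB m1 m2 r mu d1 : d1 <= mu*m1^2 + (r*mu)*(m2-m1) -> m1 + m2 <= 2*r ->
  0 < r*mu -> mu < 0 -> d1 <= mu*(m1-r)^2.
Proof.
  intros H1 H2 Hp Hmu.
  assert ((r*mu)*(m2-m1) <= (r*mu)*(2*r - 2*m1)) by (apply Rmult_le_compat_l; lra).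
  assert (mu * r^2 <= 0) by (pose proof (pow2_ge_0 r); nra).
  assert (E: mu*m1^2 + (r*mu)*(2*r - 2*m1) = mu*(m1-r)^2 + mu*r^2) by ring. lra.
Qed.

Lemma inv_lip a b m0 c : a <= m0 -> m0 < 0 -> b <= m0 -> Rabs (b - a) <= c -> / a - / b <= c * / (m0 * m0).
Proof.
  intros Ha Hm Hb Hc.
  assert (E: / a - / b = (b - a) * / (a * b)) by (field; lra).
  assert (Hab: m0 * m0 <= a * b) by nra.
  assert (Hz: 0 < m0 * m0) by nra.
  assert (Hi: / (a * b) <= / (m0 * m0)) by (apply Rinv_le_contravar; lra).
  assert (Hp: 0 < / (a * b)) by (apply Rinv_0_lt_compat; nra).
  pose proof (Rle_abs (b - a)). pose proof (Rabs_pos (b - a)).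
  rewrite E. apply Rle_trans with (c * / (a * b)).
  apply Rmult_le_compat_r; lra. apply Rmult_le_compat_l; lra.
Qed.

Lemma stepB k mu tau m1 m2 N :
  0 < k -> mu < 0 -> loc_lipschitz_0 m1 tau -> null_set N ->
  (forall t, 0 < t < tau -> ~ N t ->
       exists d1 d2, derivable_pt_lim m1 t d1 /\ derivable_pt_lim m2 t d2 /\
         d1 <= mu * (m1 t)^2 + k * (m2 t - m1 t) /\
         d2 <= mu * (m2 t)^2 + k * (m2 t - m1 t)) ->
  (forall t, 0 <= t < tau -> m1 t + m2 t <= 2 * (k / mu)) ->
  m1 0 - k / mu < 0 ->
  forall t, 0 <= t < tau -> t < 1 / ((m1 0 - k / mu) * mu) ->
    m1 t - k / mu <= (m1 0 - k / mu) / (1 - (m1 0 - k / mu) * mu * t).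
Proof.
  intros Hk Hmu Hl1 HN Hd Hs Hm0 t Ht HT.
  set (r := k / mu) in *.
  assert (Hr: r * mu = k) by (unfold r; field; lra).
  set (m0 := m1 0 - r) in *.
  assert (Hgood: forall x, 0 < x < tau -> ~ N x -> exists d1, derivable_pt_lim m1 x d1 /\
             d1 <= mu * (m1 x - r)^2).
  { intros x Hx HNx. destruct (Hd x Hx HNx) as [d1 [d2 [Hd1 [_ [Hb1 _]]]]].
    exists d1; split; auto. rewrite <- Hr in Hb1. apply (algB _ (m2 x) _ _ _ Hb1); auto.
    apply Hs; lra. lra. }
  destruct (Hl1 t Ht) as [L1 [HL1 Hm1]].
  assert (Hdec: forall y, 0 <= y <= t -> m1 y - r <= m0).
  { intros y Hy. destruct (Hl1 y ltac:(lra)) as [L [HL Hm]].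
    assert (m1 y <= m1 0); [|unfold m0; lra].
    apply (mono m1 0 y L N); try lra; auto.
    - intros a b Ha Hb. pose proof (Hm b a ltac:(lra) ltac:(lra)).
      rewrite (Rabs_right (b - a)) in H by lra. pose proof (Rle_abs (m1 b - m1 a)). lra.
    - intros x Hx HNx e He. destruct (Hgood x ltac:(lra) HNx) as [d1 [Hd1 Hb]].
      assert (mu * (m1 x - r)^2 <= 0) by (pose proof (pow2_ge_0 (m1 x - r)); nra).
      destruct (deriv_good m1 x d1 0 Hd1 ltac:(lra) e He) as [eta [Heta Hh]].
      exists eta; split; auto. intros s Hs1 _. rewrite Rplus_0_l in Hh. auto. }
  set (p := fun y => -1 / (m1 y - r) - mu * y).
  assert (Hz: 0 < m0 * m0) by nra.
  assert (Hpt: p t <= p 0).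
  { apply (mono p 0 t (L1 * / (m0 * m0) - mu) N); try lra; auto.
    - assert (0 <= L1 * / (m0 * m0)) by (apply Rmult_le_pos; [lra | left; apply Rinv_0_lt_compat; lra]). lra.
    - intros x y Hx Hy. pose proof (Hm1 y x ltac:(lra) ltac:(lra)).
      rewrite (Rabs_right (y - x)) in H by lra.
      replace (m1 y - m1 x) with ((m1 y - r) - (m1 x - r)) in H by ring.
      pose proof (inv_lip (m1 x - r) (m1 y - r) m0 _ (Hdec x ltac:(lra)) Hm0 (Hdec y ltac:(lra)) H).
      unfold p. unfold Rdiv. 
      replace (-1 * / (m1 y - r) - mu * y - (-1 * / (m1 x - r) - mu * x))
        with ((/ (m1 x - r) - / (m1 y - r)) - mu * (y - x)) by ring.
      replace ((L1 * / (m0 * m0) - mu) * (y - x)) with (L1 * (y - x) * / (m0 * m0) - mu * (y - x)) by ring.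
      lra.
    - intros x Hx HNx e He. destruct (Hgood x ltac:(lra) HNx) as [d1 [Hd1 Hb]].
      assert (Hmx: m1 x - r < 0) by (pose proof (Hdec x ltac:(lra)); lra).
      assert (HmD: derivable_pt_lim (fun y => m1 y - r) x (d1 - 0)).
      { exact (derivable_pt_lim_minus _ _ x _ _ Hd1 (derivable_pt_lim_const r x)). }
      assert (HqD: derivable_pt_lim (fun y => -1 / (m1 y - r)) x
                     ((0 * (m1 x - r) - (d1 - 0) * (-1)) / Rsqr (m1 x - r))).
      { exact (derivable_pt_lim_div (fct_cte (-1)) (fun y => m1 y - r) x _ _
                 (derivable_pt_lim_const (-1) x) HmD ltac:(lra)). }
      assert (HpD: derivable_pt_lim p x
                     ((0 * (m1 x - r) - (d1 - 0) * (-1)) / Rsqr (m1 x - r) - mu * 1)).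
      { exact (derivable_pt_lim_minus _ _ x _ _ HqD (derivable_pt_lim_scal id mu x 1 (derivable_pt_lim_id x))). }
      set (z := Rsqr (m1 x - r)) in *.
      assert (Hz2: z = (m1 x - r)^2) by (unfold z, Rsqr; ring).
      assert (Hzp: 0 < z) by (unfold z; apply Rlt_0_sqr; lra).
      assert (E: (0 * (m1 x - r) - (d1 - 0) * (-1)) / z - mu * 1 = (d1 - mu * z) * / z) by (field; lra).
      assert (0 < / z) by (apply Rinv_0_lt_compat; lra).
      assert ((d1 - mu * z) * / z <= 0) by (rewrite <- Hz2 in Hb; nra).
      destruct (deriv_good p x _ 0 HpD ltac:(lra) e He) as [eta [Heta Hh]].
      exists eta; split; auto. intros s Hs1 _. rewrite Rplus_0_l in Hh. auto. }
  unfold p in Hpt. fold m0 in Hpt.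
  pose proof (Hdec t ltac:(lra)) as Hmt.
  set (mt := m1 t - r) in *.
  assert (Hmtn: mt < 0) by lra.
  assert (HmP: 0 < m0 * mu) by nra.
  assert (HD: 0 < 1 - m0 * mu * t).
  { assert (t * (m0 * mu) < 1 / (m0 * mu) * (m0 * mu)) by (apply Rmult_lt_compat_r; lra).
    replace (1 / (m0 * mu) * (m0 * mu)) with 1 in H by (field; nra). nra. }
  unfold Rdiv in Hpt.
  assert (mt * / mt = 1) by (field; lra). assert (m0 * / m0 = 1) by (field; lra).
  assert (Hk1: mt * (1 - m0 * mu * t) <= m0).
  { assert (Hpos: 0 < mt * m0) by nra.
    assert (-1 * / mt - mu * t <= -1 * / m0 - mu * 0) by lra.
    assert ((mt * m0) * (-1 * / mt - mu * t) <= (mt * m0) * (-1 * / m0 - mu * 0)) by (apply Rmult_le_compat_l; lra).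
    nra. }
  unfold Rdiv. assert (0 < / (1 - m0 * mu * t)) by (apply Rinv_0_lt_compat; lra).
  assert ((1 - m0 * mu * t) * / (1 - m0 * mu * t) = 1) by (field; lra).
  nra.
Qed.
Theorem lemma4p2 (k mu tau : R) (m1 m2 : R -> R) :
  0 < k -> mu < 0 -> 0 < tau ->
  loc_lipschitz_0 m1 tau -> loc_lipschitz_0 m2 tau ->
  (forall t, 0 <= t < tau -> m1 t <= m2 t) ->
  0 <= m2 0 ->
  (exists N : R -> Prop, null_set N /\
     forall t, 0 < t < tau -> ~ N t ->
       exists d1 d2, derivable_pt_lim m1 t d1 /\ derivable_pt_lim m2 t d2 /\
         d1 <= mu * (m1 t)^2 + k * (m2 t - m1 t) /\
         d2 <= mu * (m2 t)^2 + k * (m2 t - m1 t)) ->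
  m1 0 <= 2 * k / mu - m2 0 ->
  let m := fun t => m1 t - k / mu in
  m 0 < 0 /\
  (forall t, 0 <= t < tau -> t < 1 / (m 0 * mu) ->
     m t <= m 0 / (1 - m 0 * mu * t)) /\
  (1 / (m 0 * mu) <= tau ->
     forall M : R, exists delta, 0 < delta /\
       forall t, 1 / (m 0 * mu) - delta < t < 1 / (m 0 * mu) -> m t < M) /\
  tau <= 1 / (m 0 * mu).
Proof.
  intros Hk Hmu Htau Hl1 Hl2 Hle Hm20 [N [HN Hd]] H0. cbv beta zeta.
  assert (Hr: k / mu < 0).
  { unfold Rdiv. assert (/ mu < 0) by (apply Rinv_lt_0_compat; lra). nra. }
  assert (E2: 2 * k / mu = 2 * (k / mu)) by (field; lra).
  rewrite E2 in H0.
  assert (HA := stepA k mu tau m1 m2 N Hk Hmu Hl1 Hl2 HN Hd ltac:(lra)).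
  assert (Hm0: m1 0 - k / mu < 0) by lra.
  assert (HB := stepB k mu tau m1 m2 N Hk Hmu Hl1 HN Hd HA Hm0).
  set (r := k / mu) in *. set (m0 := m1 0 - r) in *.
  set (T := 1 / (m0 * mu)).
  assert (HmP: 0 < m0 * mu) by nra.
  assert (HT: 0 < T) by (unfold T; apply Rdiv_lt_0_compat; lra).
  assert (HTe: T * (m0 * mu) = 1) by (unfold T; field; lra).
  assert (Hc3: T <= tau -> forall M : R, exists delta, 0 < delta /\
       forall t, T - delta < t < T -> m1 t - r < M).
  { intros HTt M. set (A := Rabs M). set (c := - mu).
    assert (HA0: 0 <= A) by apply Rabs_pos.
    set (d0 := / ((A + 1) * c)).
    assert (Hd0: 0 < d0) by (apply Rinv_0_lt_compat; unfold c; nra).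
    exists (Rmin T d0). split; [apply Rmin_pos; lra|].
    intros t Ht. pose proof (Rmin_l T d0). pose proof (Rmin_r T d0).
    pose proof (HB t ltac:(lra) ltac:(unfold T in *; lra)) as Hb.
    fold m0 in Hb.
    set (D := 1 - m0 * mu * t) in *.
    assert (HD: 0 < D).
    { unfold D. assert (m0 * mu * t < m0 * mu * T) by (apply Rmult_lt_compat_l; lra). lra. }
    set (X := - m0 / (A + 1)).
    assert (HX: X * (A + 1) = - m0) by (unfold X; field; lra).
    assert (HX0: 0 < X) by (unfold X; apply Rdiv_lt_0_compat; lra).
    assert (HDX: D < X).
    { assert (m0 * mu * (T - Rmin T d0) < m0 * mu * t) by (apply Rmult_lt_compat_l; lra).
      assert (m0 * mu * Rmin T d0 <= m0 * mu * d0) by (apply Rmult_le_compat_l; lra).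
      assert (Hq: m0 * mu * d0 = X) by (unfold X, d0, c; field; split; lra).
      unfold D. nra. }
    assert (HMA: - A <= M). { unfold A. pose proof (Rle_abs (- M)) as HH. rewrite Rabs_Ropp in HH. lra. }
    assert (M * D >= - A * D) by nra.
    assert (- A * D >= - A * X) by nra.
    assert (Hlt: m0 < M * D) by nra.
    assert (D * / D = 1) by (field; lra). assert (0 < / D) by (apply Rinv_0_lt_compat; lra).
    unfold Rdiv in Hb. nra. }
  split; [lra|]. split; [exact HB|]. split; [exact Hc3|].
  destruct (Rle_lt_dec tau T) as [|Hlt]; auto. exfalso.
  destruct (Hl1 T ltac:(lra)) as [L [HL HmL]].
  destruct (Hc3 ltac:(lra) (m1 0 - L * T - r)) as [del [Hdel Ht]].
  set (t := Rmax (T - del / 2) (T / 2)).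
  assert (T - del / 2 <= t) by apply Rmax_l. assert (T / 2 <= t) by apply Rmax_r.
  assert (t < T) by (apply Rmax_lub_lt; lra).
  pose proof (Ht t ltac:(lra)).
  pose proof (HmL t 0 ltac:(lra) ltac:(lra)) as G3.
  rewrite (Rabs_right (t - 0)) in G3 by lra.
  pose proof (Rle_abs (- (m1 t - m1 0))) as G4. rewrite Rabs_Ropp in G4.
  assert (L * (t - 0) <= L * T) by nra. lra.
Qed.
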